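(* Consider the dynamic composite online convex optimization setting in the context, suppose that the Regularity Assumption, the Lipschitz-likeness Assumption on $\mathbb{B}_h$, and the non-expansiveness Assumption on the maps $\Phi_t$ hold, and that $r_t$ is available so that $\hat{r}_t=r_t$. Run OptDCMD with $\hat r_t=r_t$: starting from some $y_0\in\mathbb{X}$, for $t=1,\dots,T$, $$x_t=\arg\min_{x\in\mathbb{X}}\big\{\eta_t\langle\nabla\hat{s}_t(y_{t-1}),x\rangle+\eta_t r_t(x)+\mathbb{B}_h(x,y_{t-1})\big\},$$ $$\tilde{y}_t=\arg\min_{y\in\mathbb{X}}\big\{\eta_t\langle\nabla s_t(x_t),y\rangle+\eta_t r_t(y)+\mathbb{B}_h(y,y_{t-1})\big\},\qquad y_t=\Phi_t(\tilde{y}_t),$$ with step-size $\eta_1=\eta_2=\frac{1}{2\beta}$ and $\eta_t=\sqrt{\frac{C'_{t-2}+1}{D'_{t-1}+\theta_t}}$ for $t>2$, where the parameters $\theta_t$ are chosen such that $\eta_t\le\eta_{t-1}\le\frac{1}{2\beta}$ and $\theta_t\ge\theta_{t-1}$ for all $t$. Then $$\mathbf{Reg}^d_T\le O\Big(\sqrt{(\theta_T+D'_T)(1+C'_T)}\Big),$$ where $O(\cdot)$ hides constants not depending on $T$.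
   Context: Let $\mathcal{A}$ be a Banach space with norm $\|\cdot\|$ and dual norm $\|\cdot\|_*$. Bregman divergence: $\mathbb{B}_h(x,y)=h(x)-h(y)-\langle\nabla h(y),x-y\rangle$. $f$ is $\beta$-smooth if differentiable with $\|\nabla f(x)-\nabla f(y)\|_*\le\beta\|x-y\|$. At each round $t=1,\dots,T$ the player picks $x_t\in\mathbb{X}$ and incurs $f_t=s_t+r_t$; before choosing $x_t$ it has a gradient prediction $\nabla\hat{s}_t$ of $\nabla s_t$ and dynamical models $\Phi_t:\mathbb{X}\to\mathbb{X}$ of a reference sequence $u_1,\dots,u_{T+1}\in\mathbb{X}$. Regularity Assumption: (i) $\mathbb{X}\subseteq\mathcal{A}$ convex; (ii) $h$ differentiable and 1-strongly convex on $\mathbb{X}$; (iii) each $s_t$ convex and $\beta$-smooth, each $r_t$ convex; (iv) $\mathbb{B}_h(x,y)\le R^2$ for all $x,y\in\mathbb{X}$, some $R>0$; (v) $\|\nabla s_t(x)-\nabla\hat{s}_t(x)\|_*\le\sigma<\infty$ for all $t,x$; (vi) each function prediction $\hat{r}_t$ convex with $|r_t(x)-\hat{r}_t(x)|<\infty$. Lipschitz-likeness Assumption: there is $\gamma>0$ with $\mathbb{B}_h(x,z)-\mathbb{B}_h(y,z)\le\gamma\|x-y\|$ for all $x,y,z\in\mathbb{X}$. Non-expansiveness Assumption: $\mathbb{B}_h(\Phi_t(x),\Phi_t(y))\le\mathbb{B}_h(x,y)$ for all $x,y$, $t$. Define $D'_t=\sum_{\tau=1}^t\|\nabla s_\tau(y_{\tau-1})-\nabla\hat{s}_\tau(y_{\tau-1})\|_*^2$,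 $C'_t=\sum_{\tau=1}^t\|u_{\tau+1}-\Phi_\tau(u_\tau)\|$ (with $C'_0=0$), and dynamic regret $\mathbf{Reg}^d_T=\sum_{t=1}^T f_t(x_t)-\sum_{t=1}^T f_t(u_t)$. *)

(* Defs.v *)
From HB Require Import structures.
From mathcomp Require Import all_boot all_order all_algebra.
From mathcomp Require Import all_classical all_reals all_analysis.
Set Implicit Arguments. Unset Strict Implicit. Unset Printing Implicit Defensive.
Import Order.TTheory GRing.Theory Num.Theory.
Import numFieldNormedType.Exports.
Local Open Scope classical_set_scope.
Local Open Scope ring_scope.

Section Defs.
Context {R : realType} {E : normedModType R}.

Definition dual_norm (g : E -> R) : R :=
  sup [set g v | v in [set v : E | `|v| <= 1]].

Definition grad (f : E -> R) (x : E) : E -> R := fun v => 'd f x v.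

Definition breg (h : E -> R) (x y : E) : R := h x - h y - grad h y (x - y).

Definition convex_on (X : set E) (f : E -> R) : Prop :=
  forall x y (l : R), X x -> X y -> 0 <= l <= 1 ->
    f (l *: x + (1 - l) *: y) <= l * f x + (1 - l) * f y.

Definition differentiable_on (X : set E) (f : E -> R) : Prop :=
  forall x, X x -> differentiable f x.

Definition strongly_convex1_on (X : set E) (h : E -> R) : Prop :=
  differentiable_on X h /\
  forall x y, X x -> X y -> h x >= h y + grad h y (x - y) + 2^-1 * `|x - y| ^+ 2.

Definition smooth_on (X : set E) (beta : R) (f : E -> R) : Prop :=
  differentiable_on X f /\
  forall x y, X x -> X y ->
    dual_norm (fun v => grad f x v - grad f y v) <= beta * `|x - y|.

Definition is_argmin (X : set E) (F : E -> R) (x : E) : Prop :=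
  X x /\ forall z, X z -> F x <= F z.

Definition Cpath (u : nat -> E) (Phi : nat -> E -> E) (t : nat) : R :=
  \sum_(1 <= tau < t.+1) `|u tau.+1 - Phi tau (u tau)|.

Definition Dpred (s sh : nat -> E -> R) (y : nat -> E) (t : nat) : R :=
  \sum_(1 <= tau < t.+1)
     dual_norm (fun v => grad (s tau) (y tau.-1) v - grad (sh tau) (y tau.-1) v) ^+ 2.

Definition dyn_regret (s r : nat -> E -> R) (x u : nat -> E) (T : nat) : R :=
  \sum_(1 <= t < T.+1) ((s t (x t) + r t (x t)) - (s t (u t) + r t (u t))).

End Defs.

(* Main.v *)
Require Import Defs.
From HB Require Import structures.
From mathcomp Require Import all_boot all_order all_algebra.
From mathcomp Require Import all_classical all_reals all_analysis.
From mathcomp Require Import ring lra.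
Import Order.TTheory GRing.Theory Num.Theory.
Import numFieldNormedType.Exports.
Local Open Scope classical_set_scope.
Local Open Scope ring_scope.

Section S.
Context {R : realType} {E : completeNormedModType R}.

Lemma lin_bound (f : {linear E -> R}) : continuous f ->
  exists r, 0 <= r /\ forall v, `|f v| <= r * `|v|.
Proof.
move=> cf.
have := (linear_boundedP f).1 ((linear_bounded_continuous f).2 cf).
move=> [M [_ HM]].
exists (`|M| + 1); split; first by rewrite addr_ge0.
apply: HM.
rewrite (le_lt_trans (ler_norm M)) // ltrDl ltr01 //.
Qed.

Lemma grad_bound (f : E -> R) p : differentiable f p ->
  exists r, 0 <= r /\ forall v, `|grad f p v| <= r * `|v|.
Proof. move=> df; rewrite /grad; exact: (@lin_bound ('d f p) (diff_continuous df)). Qed.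

Lemma dual_cs (phi : E -> R) r : 0 <= r ->
  (forall l v, phi (l *: v) = l * phi v) ->
  (forall v, `|phi v| <= r * `|v|) ->
  (0 <= dual_norm phi) /\ forall v, phi v <= dual_norm phi * `|v|.
Proof.
move=> r0 hom bnd.
have phi0 : phi 0 = 0 by rewrite -(scale0r 0) hom mul0r.
have ub : has_ubound [set phi v | v in [set v : E | `|v| <= 1]].
  exists r => _ [v /= v1 <-].
  apply: le_trans (ler_norm _) _.
  apply: le_trans (bnd v) _.
  by rewrite ler_piMr.
have ubs := ub_le_sup ub.
split.
  apply: ubs; exists 0 => //=; by rewrite normr0.
move=> v.
have [->|v0] := eqVneq v 0; first by rewrite phi0 normr0 mulr0.
have nv : 0 < `|v| by rewrite normr_gt0.
have -> : v = `|v| *: (`|v|^-1 *: v) by rewrite scalerA divff ?scale1r // gt_eqF.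
have nw : `| (`|v|^-1 *: v) | = 1 by rewrite normrZ normfV normr_id mulVf ?gt_eqF.
rewrite hom normrZ normr_id nw mulr1 mulrC ler_pM2r //.
by apply: ubs; exists (`|v|^-1 *: v) => //=; rewrite nw.
Qed.
Lemma gradZ (f : E -> R) p (l : R) v : grad f p (l *: v) = l * grad f p v.
Proof. by rewrite /grad linearZ. Qed.
Lemma gradB (f : E -> R) p v w : grad f p (v - w) = grad f p v - grad f p w.
Proof. by rewrite /grad linearB. Qed.
Lemma gradD (f : E -> R) p v w : grad f p (v + w) = grad f p v + grad f p w.
Proof. by rewrite /grad linearD. Qed.

Lemma convcomb (l : R) (u x : E) : l *: u + (1-l) *: x = l *: (u - x) + x.
Proof. by rewrite scalerBr scalerBl scale1r [RHS]addrAC addrA. Qed.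
Lemma cvx_mem (X : set E) (x y : E) (l : R) : convex_set X -> X x -> X y -> 0 <= l -> l <= 1 ->
  X (l *: x + (1-l) *: y).
Proof.
move=> cX Xx Xy l0 l1.
by have := cX x y (Itv01 l0 l1); rewrite !inE => /(_ Xx Xy).
Qed.
Lemma lim_right_ge (g : R -> R) (a L : R) : g x @[x --> 0^'] --> L ->
  (forall l, 0 < l -> l <= 1 -> a <= g l) -> a <= L.
Proof.
move=> gL H.
have gR := cvg_dnbhs_at_right gL.
apply: (@closed_cvg _ _ _ _ g (fun x => a <= x) _ _ L gR).
  exact: closed_ge.
near=> l.
apply: H.
  by near: l; exact: nbhs_right_gt.
near: l; apply: nbhs_right_le; exact: ltr01.
Unshelve. all: by end_near.
Qed.
Lemma diff_lim (f : E -> R) x v : differentiable f x ->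
  (fun l : R => l^-1 * (f (l *: v + x) - f x)) @ 0^' --> 'd f x v.
Proof.
move=> df; rewrite -deriveE //.
have := @diff_derivable _ _ _ f x v df. rewrite /derivable. by [].
Qed.
Lemma three_point (X : set E) (h : E -> R) (f rho : E -> R) (p y x u : E) (eta : R) :
  convex_set X -> strongly_convex1_on X h -> 0 <= eta -> convex_on X rho ->
  X y -> X u ->
  is_argmin X (fun z => eta * grad f p z + eta * rho z + breg h z y) x ->
  eta * grad f p x + eta * rho x + breg h x y + breg h u x <=
  eta * grad f p u + eta * rho u + breg h u y.
Proof.
move=> cX [dh _] eta0 crho Xy Xu [Xx xmin].
set a := (eta * grad f p x + eta * rho x + breg h x y + breg h u x) -
  (eta * grad f p u + eta * rho u + breg h u y).
suff : a <= 0 by rewrite subr_le0.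
have gL : (fun l : R => l^-1 * (h (l *: (u - x) + x) - h x) - 'd h x (u - x)) @ 0^' --> ('d h x (u - x) - 'd h x (u - x)).
  apply: cvgB; [exact: (@diff_lim h x (u - x) (dh x Xx)) | exact: cvg_cst].
rewrite subrr in gL.
apply: (@lim_right_ge _ a 0 gL) => l l0 l1 /=.
have Xz := cvx_mem X u x l cX Xu Xx (ltW l0) l1.
have := xmin _ Xz.
have cr := crho u x l Xu Xx (ltac:(by rewrite (ltW l0) l1)).
have cr' : eta * rho (l *: u + (1 - l) *: x) <= eta * (l * rho u + (1 - l) * rho x).
  by apply: ler_wpM2l.
rewrite convcomb in cr' *.
rewrite /a /breg.
rewrite !gradB !gradD !gradZ !gradB.
move=> H.
have -> : l^-1 * (h (l *: (u - x) + x) - h x) - 'd h x (u - x) =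
   l^-1 * (h (l *: (u - x) + x) - h x - l * grad h x (u - x)).
  rewrite /grad; field; exact: lt0r_neq0.
rewrite gradB.
rewrite ler_pdivlMl //.
move: H cr'.
set A := h _.
lra.
Qed.

Lemma dual_diff (f g : E -> R) p q : differentiable f p -> differentiable g q ->
  0 <= dual_norm (fun v => grad f p v - grad g q v) /\
  forall v, grad f p v - grad g q v <= dual_norm (fun v => grad f p v - grad g q v) * `|v|.
Proof.
move=> df dg.
have [r1 [r10 b1]] := grad_bound f p df.
have [r2 [r20 b2]] := grad_bound g q dg.
apply: (@dual_cs (fun v => grad f p v - grad g q v) (r1 + r2)); first by rewrite addr_ge0.
  by move=> l v; rewrite !gradZ mulrBr.
move=> v; apply: le_trans (ler_normB _ _) _.
by rewrite mulrDl lerD.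
Qed.

Lemma grad_ineq (X : set E) (f : E -> R) x u : convex_set X -> convex_on X f ->
  differentiable f x -> X x -> X u -> f x + grad f x (u - x) <= f u.
Proof.
move=> cX cf df Xx Xu.
rewrite -subr_ge0.
have gL : ((f u - f x) - l^-1 * (f (l *: (u - x) + x) - f x)) @[l --> 0^'] --> ((f u - f x) - 'd f x (u - x)).
  apply: cvgB; [exact: cvg_cst | exact: (@diff_lim f x (u - x) df)].
have -> : f u - (f x + grad f x (u - x)) = (f u - f x) - 'd f x (u - x) by rewrite /grad; lra.
apply: (@lim_right_ge _ 0 _ gL) => l l0 l1 /=.
have := cf u x l Xu Xx ltac:(by rewrite (ltW l0) l1).
rewrite convcomb => H.
rewrite subr_ge0 ler_pdivrMl //.
lra.
Qed.

Lemma step_arith (eta beta a b d : R) : 0 < eta -> 0 < beta -> 2 * beta * eta <= 1 ->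
  0 <= a -> 0 <= b ->
  eta * (beta * a * b) + eta * (d * b) <= a ^+ 2 / 4 + b ^+ 2 / 2 + eta ^+ 2 * d ^+ 2.
Proof.
move=> e0 b0 eb a0 b0'.
have h1 : eta * (beta * a * b) <= a * b / 2.
  have : eta * beta <= 1/2 by lra.
  move=> H; have ab0 : 0 <= a * b by rewrite mulr_ge0.
  nra.
have h2 : 0 <= (a - b) ^+ 2 by rewrite sqr_ge0.
have h3 : 0 <= (eta * d - b / 2) ^+ 2 by rewrite sqr_ge0.
nra.
Qed.

Lemma breg_lb (X : set E) h a b : strongly_convex1_on X h -> X a -> X b ->
  `|a - b| ^+ 2 / 2 <= breg h a b.
Proof.
move=> [_ sc] Xa Xb; have := sc a b Xa Xb; rewrite /breg; lra.
Qed.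

Lemma step_comb {e ghx ghyt rx ryt Bxy Bytx Byty gyt guu ru Buy Buyt Sx Su gsx gsyt gxx P1 P2 a2 b2 Q : R} :
  e * ghx + e * rx + Bxy + Bytx <= e * ghyt + e * ryt + Byty ->
  e * gyt + e * ryt + Byty + Buyt <= e * guu + e * ru + Buy ->
  e * (Sx + (guu - gxx)) <= e * Su ->
  e * (gxx - gyt - (gsx - gsyt)) <= P1 ->
  e * (gsx - gsyt - (ghx - ghyt)) <= P2 ->
  0 <= a2 -> a2 / 2 <= Bxy -> b2 / 2 <= Bytx ->
  P1 + P2 <= a2 / 4 + b2 / 2 + Q ->
  e * (Sx + rx - (Su + ru)) <= Buy - Buyt + Q.
Proof.
move=> A B C D F a0 G H I.
lra.
Qed.

Lemma step (X : set E) (h S Rr Sh : E -> R) (beta : R) (y0 x yt uu : E) (eta : R) :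
  convex_set X -> strongly_convex1_on X h -> 0 < beta ->
  convex_on X S -> smooth_on X beta S -> convex_on X Rr -> differentiable_on X Sh ->
  0 < eta -> 2 * beta * eta <= 1 ->
  X y0 -> X uu ->
  is_argmin X (fun z => eta * grad Sh y0 z + eta * Rr z + breg h z y0) x ->
  is_argmin X (fun z => eta * grad S x z + eta * Rr z + breg h z y0) yt ->
  eta * ((S x + Rr x) - (S uu + Rr uu)) <=
  breg h uu y0 - breg h uu yt +
  eta ^+ 2 * dual_norm (fun v => grad S y0 v - grad Sh y0 v) ^+ 2.
Proof.
move=> cX sc b0 cS [dS sm] cR dSh e0 eb Xy0 Xuu m1 m2.
have Xx := m1.1. have Xyt := m2.1.
have A := three_point X h Sh Rr y0 y0 x yt eta cX sc (ltW e0) cR Xy0 Xyt m1.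
have B := three_point X h S Rr x y0 yt uu eta cX sc (ltW e0) cR Xy0 Xuu m2.
have C := grad_ineq X S x uu cX cS (dS x Xx) Xx Xuu.
have Ce : eta * (S x + grad S x (uu - x)) <= eta * S uu by rewrite ler_pM2l.
have [_ D1] := dual_diff S S x y0 (dS x Xx) (dS y0 Xy0).
have [d0 D2] := dual_diff S Sh y0 y0 (dS y0 Xy0) (dSh y0 Xy0).
have D1' := D1 (x - yt).
have D2' := D2 (x - yt).
have sm' := sm x y0 Xx Xy0.
set dl := dual_norm (fun v => grad S y0 v - grad Sh y0 v) in D2' *.
set a := `|x - y0| in sm' *.
set b := `|x - yt| in D1' D2' *.
have a0 : 0 <= a by exact: normr_ge0.
have b0' : 0 <= b by exact: normr_ge0.
have D1'' : grad S x (x - yt) - grad S y0 (x - yt) <= beta * a * b.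
  apply: le_trans D1' _; by rewrite ler_wpM2r.
have E1 := breg_lb X h x y0 sc Xx Xy0.
have E2 := breg_lb X h yt x sc Xyt Xx.
rewrite distrC -/b in E2.
rewrite -/a in E1.
have F := step_arith eta beta a b dl e0 b0 eb a0 b0'.
have G1 : eta * (grad S x (x - yt) - grad S y0 (x - yt)) <= eta * (beta * a * b) by rewrite ler_pM2l.
have G2 : eta * (grad S y0 (x - yt) - grad Sh y0 (x - yt)) <= eta * (dl * b) by rewrite ler_pM2l.
rewrite !gradB in G1 G2 Ce.
exact: (step_comb A B Ce G1 G2 (sqr_ge0 a) E1 E2 F).
Qed.

Lemma key_arith (be sg sc sp sA d : R) : 0 < be -> 0 <= sg -> 0 <= sc -> 2 * be <= sp ->
  sp <= sA -> sA ^+ 2 = sp ^+ 2 + d -> d <= sg ^+ 2 ->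
  sc / sp * d <= (2 + sg / (2 * be)) * sc * (sA - sp).
Proof.
move=> b0 s0 c0 hp hA hsq hd.
have p0 : 0 < sp by lra.
set w := sA - sp.
have w0 : 0 <= w by rewrite /w subr_ge0.
have dE : d = w * (2 * sp + w) by rewrite /w; rewrite -[d](addKr (sp ^+ 2)) -hsq; ring.
have ws : w <= sg.
  rewrite leNgt; apply/negP => H.
  have : sg ^+ 2 < w ^+ 2 by rewrite ltr_pXn2r // ?inE.
  nra.
have k : sg <= sg / (2 * be) * sp.
  have k0 : 0 <= sg / (2 * be) * (sp - 2 * be).
    by apply: mulr_ge0; [rewrite divr_ge0 // mulr_ge0 // ltW | rewrite subr_ge0].
  have k1 : sg / (2 * be) * (2 * be) = sg by rewrite divfK // mulf_neq0 // gt_eqF.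
  lra.
rewrite mulrAC ler_pdivrMr // dE.
have : sc * w * (2 * sp + w) <= sc * w * (2 * sp + sg).
  by apply: ler_wpM2l; [rewrite mulr_ge0 | rewrite lerD2l].
have : sc * w * (2 * sp + sg) <= sc * w * ((2 + sg / (2 * be)) * sp).
  apply: ler_wpM2l; first by rewrite mulr_ge0.
  nra.
move=> *; nra.
Qed.

Lemma final_arith (Reg Rd2 Bn g C eta sc sp sA sC Sd s0 M rd be : R) :
  0 < be -> 0 <= Rd2 -> 0 <= Bn -> 0 < g -> 0 <= rd -> 0 <= s0 -> 0 <= M -> 0 <= C ->
  1 <= sc -> sc <= sC -> sp <= sA -> 2 * be <= sp -> eta = sc / sp ->
  C <= sc ^+ 2 - 1 + 4 * rd ->
  Reg <= (Rd2 - Bn + g * C) / eta + Sd -> Sd <= s0 + M * sC * sA ->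
  Reg <= (Rd2 + g * (1 + 4 * rd) + s0 / (2 * be) + M) * (sA * sC).
Proof.
move=> b0 R0 B0 g0 r0 s00 M0 C0 c1 cC pA bp eE CB H1 H2.
have p0 : 0 < sp by lra.
have c0 : 0 < sc by lra.
have ie : (Rd2 - Bn + g * C) / eta = (Rd2 - Bn + g * C) * sp / sc.
  by rewrite eE invf_div mulrA.
rewrite ie in H1.
have s1 : 1 <= sc ^+ 2 by rewrite expr2; nra.
have s2 : 0 <= rd * (sc ^+ 2 - 1) by rewrite mulr_ge0 // subr_ge0.
have C1 : C <= sc ^+ 2 * (1 + 4 * rd) by lra.
have C2 : C / sc <= sc * (1 + 4 * rd).
  rewrite ler_pdivrMr //; apply: le_trans C1 _; rewrite expr2; lra.
have sA0 : 0 <= sA by lra.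
have sC1 : 1 <= sC by lra.
have AC : sA <= sA * sC by nra.
have AC2 : 2 * be <= sA * sC by lra.
have T1 : Rd2 * sp / sc <= Rd2 * (sA * sC).
  rewrite ler_pdivrMr //.
  have : Rd2 * sp <= Rd2 * (sA * sC) by rewrite ler_wpM2l //; lra.
  have P : 0 <= Rd2 * (sA * sC) by rewrite mulr_ge0 // mulr_ge0 //; lra.
  have P2 : 0 <= Rd2 * (sA * sC) * (sc - 1) by rewrite mulr_ge0 // subr_ge0.
  lra.
have T2 : g * C * sp / sc <= g * (1 + 4 * rd) * (sA * sC).
  have -> : g * C * sp / sc = g * sp * (C / sc) by ring.
  have : g * sp * (C / sc) <= g * sp * (sc * (1 + 4 * rd)) by rewrite ler_wpM2l // mulr_ge0 // ltW.
  have X2 : sp * sc <= sA * sC.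
    have : sp * sc <= sA * sc by rewrite ler_wpM2r //; lra.
    have : sA * sc <= sA * sC by rewrite ler_wpM2l //.
    lra.
  have : g * (1 + 4 * rd) * (sp * sc) <= g * (1 + 4 * rd) * (sA * sC).
    by apply: ler_wpM2l => //; apply: mulr_ge0; lra.
  lra.
have T3 : 0 <= Bn * sp / sc by apply: divr_ge0; [apply: mulr_ge0 => //; lra | lra].
have T4 : s0 <= s0 / (2 * be) * (sA * sC).
  have k1 : s0 / (2 * be) * (2 * be) = s0 by rewrite divfK // mulf_neq0 // gt_eqF.
  have k0 : 0 <= s0 / (2 * be) by apply: divr_ge0 => //; apply: mulr_ge0; lra.
  nra.
have E1 : (Rd2 - Bn + g * C) * sp / sc = Rd2 * sp / sc - Bn * sp / sc + g * C * sp / sc.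
  by ring.
have E2 : M * sC * sA = M * (sA * sC) by ring.
rewrite E1 in H1; rewrite E2 in H2.
lra.
Qed.

Lemma div_step (eta l N d : R) : 0 < eta -> eta * l <= N + eta ^+ 2 * d ->
  l <= N / eta + eta * d.
Proof.
move=> e0 H.
rewrite -(ler_pM2l e0).
have -> : eta * (N / eta + eta * d) = N + eta ^+ 2 * d.
  by field; rewrite gt_eqF.
exact: H.
Qed.

Lemma ind_arith (e e' N M' W Reg l S q : R) : 0 < e' -> e' <= e -> 0 <= N ->
  l <= M' / e' + q -> Reg <= N / e + S -> W = N + M' ->
  Reg + l <= W / e' + (S + q).
Proof.
move=> e0 ee N0 H1 H2 ->.
have : N / e <= N / e'.
  by apply: ler_wpM2l => //; rewrite lef_pV2 // ?posrE //; apply: lt_le_trans ee.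
rewrite mulrDl; lra.
Qed.

Lemma claim2_arith (M sc sC sC' sq sp sA ed : R) : 0 <= M -> 0 <= sc -> sc <= sC ->
  0 <= sC' -> sC' <= sC -> 0 <= sq -> sq <= sp -> sp <= sA ->
  ed <= M * sc * (sA - sp) -> ed + M * sC' * sq <= M * sC * sA.
Proof.
move=> M0 c0 cC C'0 CC q0 qp pA H.
have h1 : M * sc * (sA - sp) <= M * sC * (sA - sp).
  by apply: ler_wpM2r; [rewrite subr_ge0 | rewrite ler_wpM2l].
have h2 : M * sC' * sq <= M * sC * sp.
  apply: (@le_trans _ _ (M * sC * sq)).
    by apply: ler_wpM2r => //; rewrite ler_wpM2l.
  by apply: ler_wpM2l => //; rewrite mulr_ge0 //; apply: le_trans CC.
have -> : M * sC * sA = M * sC * (sA - sp) + M * sC * sp by ring.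
lra.
Qed.

Lemma sum1_recr (F : nat -> R) t :
  \sum_(1 <= i < t.+2) F i = \sum_(1 <= i < t.+1) F i + F t.+1.
Proof. by rewrite big_nat_recr. Qed.
End S.

Theorem theorem5
  (R : realType) (E : completeNormedModType R)
  (X : set E) (h : E -> R) (beta Rd gamma sigma : R) :
  (* Regularity (i),(ii),(iv) *)
  convex_set X -> strongly_convex1_on X h ->
  0 < beta -> 0 < Rd -> 0 <= sigma ->
  (forall x y, X x -> X y -> breg h x y <= Rd ^+ 2) ->
  (* Lipschitz-likeness *)
  0 < gamma ->
  (forall x y z, X x -> X y -> X z -> breg h x z - breg h y z <= gamma * `|x - y|) ->
  exists K : R, forall
    (s r sh : nat -> E -> R) (Phi : nat -> E -> E) (u : nat -> E)
    (theta eta : nat -> R) (x yt y : nat -> E),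
  (* Regularity (iii), (v) *)
  (forall t, convex_on X (s t) /\ smooth_on X beta (s t)) ->
  (forall t, convex_on X (r t)) ->
  (forall t, differentiable_on X (sh t)) ->
  (forall t z, X z -> dual_norm (fun v => grad (s t) z v - grad (sh t) z v) <= sigma) ->
  (* dynamical models and non-expansiveness; reference sequence *)
  (forall t z, X z -> X (Phi t z)) ->
  (forall t a b, X a -> X b -> breg h (Phi t a) (Phi t b) <= breg h a b) ->
  (forall t, X (u t)) ->
  (* step sizes *)
  eta 1%N = (2 * beta)^-1 -> eta 2%N = (2 * beta)^-1 ->
  (forall t, (2 < t)%N -> 0 < Dpred s sh y t.-1 + theta t) ->
  (forall t, (2 < t)%N ->
     eta t = Num.sqrt ((Cpath u Phi (t - 2) + 1) / (Dpred s sh y t.-1 + theta t))) ->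
  (forall t, (1 < t)%N -> eta t <= eta t.-1 /\ eta t.-1 <= (2 * beta)^-1) ->
  (forall t, (0 < t)%N -> theta t.-1 <= theta t) ->
  (* OptDCMD iterates with hat r_t = r_t, starting from y 0 in X *)
  X (y 0%N) ->
  (forall t, (0 < t)%N -> is_argmin X
     (fun z => eta t * grad (sh t) (y t.-1) z + eta t * r t z + breg h z (y t.-1)) (x t)) ->
  (forall t, (0 < t)%N -> is_argmin X
     (fun z => eta t * grad (s t) (x t) z + eta t * r t z + breg h z (y t.-1)) (yt t)) ->
  (forall t, (0 < t)%N -> y t = Phi t (yt t)) ->
  forall T : nat, (3 <= T)%N ->
    dyn_regret s r x u T <=
      K * Num.sqrt ((theta T + Dpred s sh y T) * (1 + Cpath u Phi T)).
Proof.
move=> cX sc b0 Rd0 sg0 Bbd g0 Lip.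
pose M := 2 + sigma / (2 * beta).
exists (Rd ^+ 2 + gamma * (1 + 4 * Rd) + (3 * (sigma ^+ 2 / (2 * beta))) / (2 * beta) + M).
move=> s r sh Phi u theta eta x yt y sS rC shD sgb PhiX NE uX e1 e2 Dpos eDef eMono thMono
  Xy0 xArg ytArg yDef T T3.
have Xyt : forall t, (0 < t)%N -> X (yt t) by move=> t ht; exact: (ytArg t ht).1.
have Xx : forall t, (0 < t)%N -> X (x t) by move=> t ht; exact: (xArg t ht).1.
have Xy : forall t, X (y t).
  by case=> [|t] //; rewrite yDef //; apply: PhiX; apply: Xyt.
have b2 : 0 < 2 * beta by rewrite mulr_gt0.
pose c t := `|u t.+1 - Phi t (u t)|.
pose dd t := dual_norm (fun v => grad (s t) (y t.-1) v - grad (sh t) (y t.-1) v) ^+ 2.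
have CE : forall t, Cpath u Phi t.+1 = Cpath u Phi t + c t.+1.
  by move=> t; rewrite /Cpath sum1_recr.
have DE : forall t, Dpred s sh y t.+1 = Dpred s sh y t + dd t.+1.
  by move=> t; rewrite /Dpred sum1_recr.
have C0 : forall t, 0 <= Cpath u Phi t.
  by move=> t; rewrite /Cpath; apply: sumr_ge0 => i _; exact: normr_ge0.
have dd0 : forall t, 0 <= dd t by move=> t; rewrite /dd sqr_ge0.
have ddb : forall t, (0 < t)%N -> dd t <= sigma ^+ 2.
  move=> t ht; rewrite /dd.
  have [d0 _] := dual_diff (s t) (sh t) (y t.-1) (y t.-1)
     ((sS t).2.1 _ (Xy _)) (shD t _ (Xy _)).
  by rewrite lerXn2r ?nnegrE //; apply: sgb.
have D0 : forall t, 0 <= Dpred s sh y t.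
  by move=> t; rewrite /Dpred; apply: sumr_ge0 => i _; exact: dd0.
have CM : forall t, Cpath u Phi t <= Cpath u Phi t.+1.
  by move=> t; rewrite CE lerDl normr_ge0.
have DM : forall t, Dpred s sh y t <= Dpred s sh y t.+1.
  by move=> t; rewrite DE lerDl dd0.
have cb : forall t, c t <= 2 * Rd.
  move=> t; rewrite /c.
  have H1 := breg_lb X h (u t.+1) (Phi t (u t)) sc (uX _) (PhiX _ _ (uX _)).
  have H2 := Bbd _ _ (uX t.+1) (PhiX t _ (uX t)).
  set n := `|_| in H1 *.
  have n0 : 0 <= n by exact: normr_ge0.
  rewrite leNgt; apply/negP => H.
  have : (2 * Rd) ^+ 2 < n ^+ 2 by rewrite ltr_pXn2r // nnegrE mulr_ge0 // ltW.
  nra.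
have Bnn : forall a b, X a -> X b -> 0 <= breg h a b.
  move=> a b Xa Xb; apply: le_trans (breg_lb X h a b sc Xa Xb).
  by rewrite divr_ge0 // sqr_ge0.
have etab : forall t, (0 < t)%N -> [/\ 0 < eta t, 2 * beta * eta t <= 1 & eta t <= (2 * beta)^-1].
  move=> t ht.
  have le_inv : eta t <= (2 * beta)^-1.
    case: t ht => [//|[|t]] _; first by rewrite e1.
    by have [H1 H2] := eMono t.+2 isT; apply: le_trans H2.
  split; [| by apply: le_trans (ler_wpM2l (ltW b2) le_inv) _; rewrite mulfV ?lt0r_neq0 | exact: le_inv].
  case: t ht le_inv => [//|[|[|t]]] _ _.
  - by rewrite e1 invr_gt0.
  - by rewrite e2 invr_gt0.
  - rewrite eDef // sqrtr_gt0 divr_gt0 //; first by rewrite ltr_wpDl.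
    exact: Dpos.
have stp : forall t, (0 < t)%N -> s t (x t) + r t (x t) - (s t (u t) + r t (u t)) <=
   (breg h (u t) (y t.-1) - breg h (u t.+1) (y t) + gamma * c t) / eta t + eta t * dd t.
  move=> t ht; have [e0 eb _] := etab t ht.
  apply: div_step => //.
  have S := step X h (s t) (r t) (sh t) beta (y t.-1) (x t) (yt t) (u t) (eta t) cX sc b0
    (sS t).1 (sS t).2 (rC t) (shD t) e0 eb (Xy _) (uX t) (xArg t ht) (ytArg t ht).
  have L := Lip (u t.+1) (Phi t (u t)) (Phi t (yt t)) (uX _) (PhiX _ _ (uX _)) (PhiX _ _ (Xyt _ ht)).
  have N := NE t (u t) (yt t) (uX _) (Xyt _ ht).
  rewrite -(yDef t ht) in L N.
  rewrite /dd /c; lra.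
have RE : forall t, dyn_regret s r x u t.+1 = dyn_regret s r x u t +
    (s t.+1 (x t.+1) + r t.+1 (x t.+1) - (s t.+1 (u t.+1) + r t.+1 (u t.+1))).
  by move=> t; rewrite /dyn_regret sum1_recr.
have claim1 : forall n, dyn_regret s r x u n.+1 <=
    (Rd ^+ 2 - breg h (u n.+2) (y n.+1) + gamma * Cpath u Phi n.+1) / eta n.+1 +
    \sum_(1 <= t < n.+2) eta t * dd t.
  elim=> [|n IH].
    have -> : Cpath u Phi 1 = c 1%N by rewrite /Cpath big_nat1.
    rewrite /dyn_regret !big_nat1.
    have H := stp 1%N isT.
    have [e0 _ _] := etab 1%N isT.
    have B1 := Bbd _ _ (uX 1%N) (Xy 1%N.-1).
    apply: le_trans H _; apply: lerD => //; apply: ler_wpM2r; first by rewrite invr_ge0 ltW.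
    lra.
  rewrite RE CE sum1_recr.
  have [e0 _ _] := etab n.+2 isT.
  apply: (ind_arith (eta n.+1) (eta n.+2)
     (Rd ^+ 2 - breg h (u n.+2) (y n.+1) + gamma * Cpath u Phi n.+1)
     (breg h (u n.+2) (y n.+1) - breg h (u n.+3) (y n.+2) + gamma * c n.+2)) => //.
  - exact: (eMono n.+2 isT).1.
  - have := Bbd _ _ (uX n.+2) (Xy n.+1); have := C0 n.+1.
    have : 0 <= gamma * Cpath u Phi n.+1 by rewrite mulr_ge0 // ltW.
    lra.
  - exact: stp.
  - ring.
have M0 : 0 <= M by rewrite /M addr_ge0 // divr_ge0 // ltW.
have etaE : forall n, [/\ eta n.+3 = Num.sqrt (Cpath u Phi n.+1 + 1) /
    Num.sqrt (Dpred s sh y n.+2 + theta n.+3),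
    1 <= Num.sqrt (Cpath u Phi n.+1 + 1) &
    2 * beta <= Num.sqrt (Dpred s sh y n.+2 + theta n.+3)].
  move=> n.
  have p0 := Dpos n.+3 isT.
  have E1 : eta n.+3 = Num.sqrt (Cpath u Phi n.+1 + 1) /
      Num.sqrt (Dpred s sh y n.+2 + theta n.+3).
    rewrite eDef //.
    have -> : (n.+3 - 2 = n.+1)%N by [].
    rewrite sqrtrM; last by apply: addr_ge0.
    by rewrite sqrtrV //; exact: ltW.
  have c1 : 1 <= Num.sqrt (Cpath u Phi n.+1 + 1).
    by have := @ler_wsqrtr _ 1 (Cpath u Phi n.+1 + 1); rewrite sqrtr1; apply; rewrite lerDr.
  split => //.
  have sp0 : 0 < Num.sqrt (Dpred s sh y n.+2 + theta n.+3) by rewrite sqrtr_gt0.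
  have [_ eb _] := etab n.+3 isT.
  rewrite E1 mulrA ler_pdivrMr // mul1r in eb.
  have : 2 * beta <= 2 * beta * Num.sqrt (Cpath u Phi n.+1 + 1).
    by rewrite ler_peMr // ltW.
  lra.
have claim2 : forall n, \sum_(1 <= t < n.+4) eta t * dd t <=
    3 * (sigma ^+ 2 / (2 * beta)) +
    M * Num.sqrt (Cpath u Phi n.+3 + 1) * Num.sqrt (Dpred s sh y n.+3 + theta n.+3).
  elim=> [|n IH].
    have : \sum_(1 <= t < 4) eta t * dd t <= \sum_(1 <= t < 4) (sigma ^+ 2 / (2 * beta)).
      apply: ler_sum_nat => i /andP [hi1 hi2].
      have [e0 _ ei] := etab i hi1.
      rewrite mulrC; apply: ler_pM => //; [exact: ltW | exact: ddb].
    rewrite sumr_const_nat.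
    have -> : sigma ^+ 2 / (2 * beta) *+ (4 - 1) = 3 * (sigma ^+ 2 / (2 * beta)) by rewrite -[in LHS]mulr_natl.
    move=> H.
    have : 0 <= M * Num.sqrt (Cpath u Phi 3 + 1) * Num.sqrt (Dpred s sh y 3 + theta 3).
      by rewrite !mulr_ge0 // sqrtr_ge0.
    move: H; lra.
  rewrite sum1_recr.
  have [E1 c1 hp] := etaE n.+1.
  have p0 := Dpos n.+4 isT.
  set scc := Num.sqrt (Cpath u Phi n.+2 + 1) in E1 c1.
  set spp := Num.sqrt (Dpred s sh y n.+3 + theta n.+4) in E1 hp.
  have hA : spp <= Num.sqrt (Dpred s sh y n.+4 + theta n.+4).
    by apply: ler_wsqrtr; rewrite lerD2r DM.
  have hsq : Num.sqrt (Dpred s sh y n.+4 + theta n.+4) ^+ 2 = spp ^+ 2 + dd n.+4.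
    have q1 : 0 <= Dpred s sh y n.+3 + theta n.+4 by exact: ltW.
    have q2 : 0 <= Dpred s sh y n.+4 + theta n.+4 by have := DM n.+3; lra.
    rewrite /spp !sqr_sqrtr // DE; lra.
  have key := key_arith beta sigma scc spp _ (dd n.+4) b0 sg0 (sqrtr_ge0 _) hp hA hsq (ddb n.+4 isT).
  rewrite -E1 in key.
  have H := claim2_arith M scc (Num.sqrt (Cpath u Phi n.+4 + 1)) (Num.sqrt (Cpath u Phi n.+3 + 1))
    (Num.sqrt (Dpred s sh y n.+3 + theta n.+3)) spp _ _ M0 (sqrtr_ge0 _) _ (sqrtr_ge0 _) _
    (sqrtr_ge0 _) _ hA key.
  apply: le_trans (lerD IH (lexx _)) _.
  move: H; rewrite /scc /spp.
  have h1 : Num.sqrt (Cpath u Phi n.+2 + 1) <= Num.sqrt (Cpath u Phi n.+4 + 1).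
    by apply: ler_wsqrtr; rewrite lerD2r; apply: le_trans (CM _) _; apply: CM.
  have h2 : Num.sqrt (Cpath u Phi n.+3 + 1) <= Num.sqrt (Cpath u Phi n.+4 + 1).
    by apply: ler_wsqrtr; rewrite lerD2r; apply: CM.
  have h3 : Num.sqrt (Dpred s sh y n.+3 + theta n.+3) <= Num.sqrt (Dpred s sh y n.+3 + theta n.+4).
    by apply: ler_wsqrtr; rewrite lerD2l; apply: (thMono n.+4).
  move=> /(_ h1 h2 h3) H; lra.
case: T T3 => [|[|[|n]]] // _.
have [E1 c1 hp] := etaE n.
have p0 := Dpos n.+3 isT.
have Apos : 0 <= theta n.+3 + Dpred s sh y n.+3.
  have := DM n.+2; lra.
rewrite sqrtrM // [theta _ + _]addrC [1 + Cpath _ _ _]addrC.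
have h0 : 0 <= Rd ^+ 2 by exact: sqr_ge0.
have h1 : 0 <= 3 * (sigma ^+ 2 / (2 * beta)).
  by rewrite mulr_ge0 // divr_ge0 // ?sqr_ge0 // ltW.
have h2 : Num.sqrt (Cpath u Phi n.+1 + 1) <= Num.sqrt (Cpath u Phi n.+3 + 1).
  by apply: ler_wsqrtr; rewrite lerD2r; apply: le_trans (CM _) _; apply: CM.
have h3 : Num.sqrt (Dpred s sh y n.+2 + theta n.+3) <= Num.sqrt (Dpred s sh y n.+3 + theta n.+3).
  by apply: ler_wsqrtr; rewrite lerD2r; apply: DM.
have h4 : Cpath u Phi n.+3 <= Num.sqrt (Cpath u Phi n.+1 + 1) ^+ 2 - 1 + 4 * Rd.
  rewrite sqr_sqrtr; last by apply: addr_ge0.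
  rewrite !CE; have := cb n.+2; have := cb n.+3; lra.
have h5 := Bnn _ _ (uX n.+4) (Xy n.+3).
exact: (final_arith (dyn_regret s r x u n.+3) (Rd ^+ 2) (breg h (u n.+4) (y n.+3)) gamma
  (Cpath u Phi n.+3) (eta n.+3) (Num.sqrt (Cpath u Phi n.+1 + 1))
  (Num.sqrt (Dpred s sh y n.+2 + theta n.+3)) (Num.sqrt (Dpred s sh y n.+3 + theta n.+3))
  (Num.sqrt (Cpath u Phi n.+3 + 1)) (\sum_(1 <= t < n.+4) eta t * dd t)
  (3 * (sigma ^+ 2 / (2 * beta))) M Rd beta b0 h0 h5 g0 (ltW Rd0) h1 M0 (C0 _) c1 h2 h3 hp E1
  h4 (claim1 n.+2) (claim2 n)).
Qed.
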